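(* Let $A$ be a finite set and let $X \subset A^{\mathbb Z}$ be a W-subshift. Then the set of periodic configurations of $X$ is dense in $X$.
   Context: A subshift of $A^{\mathbb Z}$ is a closed (for the product of discrete topologies) shift-invariant subset; a configuration is periodic if its orbit under the shift $(gx)(h)=x(h-g)$ is finite. $L(X)$ is the set of finite words (including the empty word) appearing as $x(i)x(i+1)\cdots x(j)$ ($i\le j$) in some $x\in X$; $|w|$ is word length. $X$ is a W-subshift if there is an integer $n_0\ge0$ such that for all $u,v\in L(X)$ there is $c\in L(X)$ with $|c|\le n_0$ and $ucv\in L(X)$. *)

(* Defs.v *)
From mathcomp Require Import all_boot.
From Stdlib Require Import ZArith.
Set Implicit Arguments. Unset Strict Implicit. Unset Printing Implicit Defensive.

Section Subshift.
Variable A : finType.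

Definition config := Z -> A.

Definition shift (g : Z) (x : config) : config := fun h => x (h - g)%Z.

(* basic open sets (cylinders) of the product of discrete topologies:
   configurations agreeing with x on the window [-n, n] *)
Definition agree_on (n : nat) (x y : config) : Prop :=
  forall h : Z, (- Z.of_nat n <= h <= Z.of_nat n)%Z -> x h = y h.

(* closed for the product topology: every point all of whose basic
   neighbourhoods meet X lies in X *)
Definition closed_set (X : config -> Prop) : Prop :=
  forall x : config, (forall n : nat, exists y, X y /\ agree_on n x y) -> X x.

Definition shift_invariant (X : config -> Prop) : Prop :=
  forall g x, X x -> X (shift g x).

Definition subshift (X : config -> Prop) : Prop :=
  closed_set X /\ shift_invariant X.

Definition periodic (x : config) : Prop :=
  exists s : list config, forall g : Z, List.In (shift g x) s.

Definition window (x : config) (i : Z) (k : nat) : seq A :=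
  map (fun j : nat => x (i + Z.of_nat j)%Z) (iota 0 k).

(* language L(X), including the empty word *)
Definition lang (X : config -> Prop) (w : seq A) : Prop :=
  exists x i, X x /\ window x i (size w) = w.

Definition W_subshift (X : config -> Prop) : Prop :=
  subshift X /\
  exists n0 : nat, forall u v : seq A, lang X u -> lang X v ->
    exists c : seq A, size c <= n0 /\ lang X (u ++ c ++ v).

Definition dense_in (P X : config -> Prop) : Prop :=
  forall x, X x -> forall n : nat, exists y, X y /\ P y /\ agree_on n x y.

End Subshift.

(* Main.v *)
Require Import Defs.
From mathcomp Require Import all_boot.
From Stdlib Require Import ZArith.
From mathcomp Require Import zify.
From Stdlib Require Import Lia Classical FunctionalExtensionality.

Set Implicit Arguments. Unset Strict Implicit. Unset Printing Implicit Defensive.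

Section Comb.
Variable A : eqType.
Variable L : seq A -> Prop.
Hypothesis Lfac : forall u v z, L (u ++ v ++ z) -> L v.
Variable n0 : nat.
Hypothesis LW : forall u v, L u -> L v -> exists c, size c <= n0 /\ L (u ++ c ++ v).

Fixpoint rep (p : seq A) j := if j is j'.+1 then p ++ rep p j' else [::].

Lemma repS_r p j : rep p j.+1 = rep p j ++ p.
Proof. elim: j => [|j IH] /=; first by rewrite cats0. by rewrite -catA -IH. Qed.

Lemma rep_s p s m : exists T, rep (s ++ p) m ++ s = s ++ T.
Proof. case: m => [|m] /=; first by exists [::]; rewrite cats0.
by exists (p ++ rep (s ++ p) m ++ s); rewrite -!catA. Qed.

Lemma Lpre u v : L (u ++ v) -> L u.
Proof. move=> H; apply: (@Lfac [::] u v); exact: H. Qed.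

Lemma key k : forall D s, size D <= k -> L s ->
  (forall c, size c <= n0 -> L (s ++ c ++ s) -> c \in D) ->
  exists p r, p = s ++ r /\ forall j, L (rep p j).
Proof.
elim: k => [|k IH] D s HD Ls Hadm;
  have [c [Hc Lc]] := LW Ls Ls; have cD := Hadm c Hc Lc.
  by move: HD cD; rewrite leqn0 => /nilP ->.
destruct (classic (exists m, L (rep (s ++ c) m ++ s) /\ ~ L (rep (s ++ c) m.+1 ++ s)))
  as [[m [Lm nLm]] | Hall].
- have [T HT] := rep_s c s m.
  set t := rep (s ++ c) m ++ s in Lm nLm HT.
  have H1 : size (filter (predC1 c) D) <= k.
    have : size (filter (predC1 c) D) < size D.
      rewrite size_filter -(count_predC (pred1 c) D).
      have : 0 < count_mem c D by rewrite -has_count has_pred1.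
      by rewrite (_ : count (predC (pred1 c)) D = count (predC1 c) D) //; lia.
    move=> H; lia.
  have H3 : forall c', size c' <= n0 -> L (t ++ c' ++ t) -> c' \in filter (predC1 c) D.
    move=> c' Hc' L'.
    rewrite mem_filter; apply/andP; split.
    * apply/negP => /eqP Ec; subst c'.
      apply: nLm.
      have : L (t ++ c ++ t) := L'.
      rewrite {1}/t HT repS_r.
      have -> : (rep (s ++ c) m ++ s) ++ c ++ s ++ T =
                (rep (s ++ c) m ++ s ++ c) ++ s ++ T by rewrite -!catA.
      by rewrite catA => /Lpre.
    * apply: Hadm => //.
      have : L (t ++ c' ++ t) := L'.
      rewrite {1}/t HT.
      have -> : (rep (s ++ c) m ++ s) ++ c' ++ s ++ T =
                rep (s ++ c) m ++ (s ++ c' ++ s) ++ T by rewrite -!catA.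
      exact: Lfac.
  have [p [r [Hp Hj]]] := IH _ t H1 Lm H3.
  exists p, (T ++ r); split; first by rewrite Hp HT catA.
  exact: Hj.
- have Hm : forall m, L (rep (s ++ c) m ++ s).
    elim=> [|m IHm] //.
    destruct (classic (L (rep (s ++ c) m.+1 ++ s))) as [H|H] => //.
    by exfalso; apply: Hall; exists m.
  exists (s ++ c), c; split => // j.
  exact: Lpre (Hm j).
Qed.

Fixpoint all_words (B : finType) n : seq (seq B) :=
  if n is n'.+1 then [::] :: [seq a :: u | a <- enum B, u <- all_words B n']
  else [:: [::]].

Lemma all_wordsP (B : finType) n (c : seq B) : size c <= n -> c \in all_words B n.
Proof.
elim: n c => [|n IH] [|a u] //= H.
rewrite in_cons; apply/orP; right.
apply: allpairs_f; first by rewrite mem_enum.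
exact: IH.
Qed.

Lemma size_rep p j : size (rep p j) = j * size p.
Proof. elim: j => [|j IH] //=; by rewrite size_cat IH mulSn. Qed.

Lemma nth_rep (a0 : A) p j m : m < j * size p ->
  nth a0 (rep p j) m = nth a0 p (m %% size p).
Proof.
elim: j m => [|j IH] m //= H.
rewrite nth_cat; case: ifP => Hm; first by rewrite modn_small.
rewrite IH; last by move: H; rewrite mulSn; lia.
have Hle : size p <= m by rewrite leqNgt Hm.
by rewrite -{2}(subnK Hle) modnDr.
Qed.

End Comb.

Lemma modn_Zmod m d : 0 < d -> Z.of_nat (m %% d) = (Z.of_nat m mod Z.of_nat d)%Z.
Proof.
move=> Hd. rewrite -Nat2Z.inj_mod; congr Z.of_nat.
apply: (Nat.mod_unique _ _ (m %/ d)).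
- have := ltn_pmod m Hd; lia.
- have := divn_eq m d; lia.
Qed.


Section Win.
Variable A : finType.

Lemma window_cat (x : config A) i a b :
  window x i (a + b) = window x i a ++ window x (i + Z.of_nat a) b.
Proof.
rewrite /window iotaD map_cat; congr (_ ++ _).
rewrite add0n -{1}(addn0 a) iotaDl -map_comp; apply: eq_map => j /=.
congr x; lia.
Qed.

Lemma size_window (x : config A) i k : size (window x i k) = k.
Proof. by rewrite /window size_map size_iota. Qed.

Lemma nth_window a0 (x : config A) i K t : t < K ->
  nth a0 (window x i K) t = x (i + Z.of_nat t)%Z.
Proof. move=> H; by rewrite /window (nth_map 0) ?size_iota // nth_iota. Qed.

Lemma lang_fac (X : config A -> Prop) u v z : lang X (u ++ v ++ z) -> lang X v.
Proof.
move=> [x [i [Xx Hw]]]; exists x, (i + Z.of_nat (size u))%Z; split => //.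
move: Hw; rewrite !size_cat window_cat window_cat => Hw.
have := congr1 (drop (size u)) Hw.
rewrite !drop_size_cat ?size_window // => H.
have := congr1 (take (size v)) H.
by rewrite !take_size_cat ?size_window.
Qed.

End Win.

Theorem theorem5p1 (A : finType) (X : config A -> Prop) :
  W_subshift X -> dense_in (fun y => periodic y) X.
Proof.
move=> [[Hcl Hsi] [n0 HW]] x Xx n.
set w := window x (- Z.of_nat n) (n + n).+1.
have Lw : lang X w by exists x, (- Z.of_nat n)%Z; split => //; rewrite size_window.
have [p [r [Hp Hrep]]] := @key _ (lang X) (@lang_fac A X) n0 HW
   (size (all_words A n0)) (all_words A n0) w (leqnn _) Lw
   (fun c Hc _ => all_wordsP Hc).
have Psz : (n + n).+1 <= size p by rewrite Hp size_cat size_window leq_addr.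
set P := size p in Psz.
set a0 := x 0%Z.
set y : config A := fun h => nth a0 p (Z.to_nat ((h + Z.of_nat n) mod Z.of_nat P)).
have PZ : (0 < Z.of_nat P)%Z by lia.
exists y; split; [|split].
-
  have Lwin : forall i K, lang X (window y i K).
    move=> i K.
    set rr := Z.to_nat ((i + Z.of_nat n) mod Z.of_nat P).
    have rrP : rr < P.
      have := Z.mod_pos_bound (i + Z.of_nat n) (Z.of_nat P) PZ; rewrite /rr; lia.
    have -> : window y i K = take K (drop rr (rep p K.+1)).
      apply: (eq_from_nth (x0 := a0)).
        rewrite size_window size_takel // size_drop size_rep; nia.
      move=> t; rewrite size_window => Ht.
      rewrite nth_window // nth_take // nth_drop nth_rep; last by nia.
      rewrite /y; congr nth.
      apply: Nat2Z.inj.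
      rewrite modn_Zmod; last by lia.
      rewrite Z2Nat.id; last by have := Z.mod_pos_bound (i + Z.of_nat t + Z.of_nat n) (Z.of_nat P) PZ; lia.
      rewrite /rr Nat2Z.inj_add Z2Nat.id; last by have := Z.mod_pos_bound (i + Z.of_nat n) (Z.of_nat P) PZ; lia.
      rewrite Zplus_mod_idemp_l; congr Z.modulo; lia.
    apply: (@lang_fac A X (take rr (rep p K.+1)) _ (drop K (drop rr (rep p K.+1)))).
    by rewrite !cat_take_drop.
  apply: Hcl => N.
  have [z [i [Xz Hz]]] := Lwin (- Z.of_nat N)%Z (N + N).+1.
  exists (Defs.shift (- i - Z.of_nat N) z); split; first exact: Hsi.
  move=> h Hh.
  rewrite size_window in Hz.
  have Ht : Z.to_nat (h + Z.of_nat N) < (N + N).+1 by lia.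
  have := congr1 (fun s => nth a0 s (Z.to_nat (h + Z.of_nat N))) Hz.
  rewrite /= !nth_window // /Defs.shift => E.
  have -> : (h - (- i - Z.of_nat N))%Z = (i + Z.of_nat (Z.to_nat (h + Z.of_nat N)))%Z by lia.
  rewrite E; congr y; lia.
-
  exists (List.map (fun k => Defs.shift (Z.of_nat k) y) (List.seq 0 P)) => g.
  have Hb := Z.mod_pos_bound g (Z.of_nat P) PZ.
  apply/List.in_map_iff; exists (Z.to_nat (g mod Z.of_nat P)); split.
    apply: functional_extensionality => h; rewrite /Defs.shift /y; congr nth; congr Z.to_nat.
    rewrite Z2Nat.id; last by lia.
    rewrite (Z.mod_eq g); last by lia.
    have -> : (h - (g - Z.of_nat P * (g / Z.of_nat P)) + Z.of_nat n)%Z =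
              (h - g + Z.of_nat n + (g / Z.of_nat P) * Z.of_nat P)%Z by lia.
    by rewrite Z_mod_plus_full.
  apply/List.in_seq; lia.
-
  move=> h Hh; rewrite /y Z.mod_small; last by lia.
  rewrite Hp nth_cat size_window ifT; last by lia.
  rewrite nth_window; last by lia.
  congr x; lia.
Qed.
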